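(* In the fixed-design setting of the context, let $P$ be the orthogonal projection of $\mathcal H$ onto $\mathcal H_m$. Then for every $\lambda>0$, \[ \mathbb E\big[\widehat{\mathcal E}_\lambda(Pf_{\lambda,\gamma})\big]\le \frac{2}{n\lambda}\operatorname{tr}\!\big(K-\widetilde K\big)\,\mathbb E\big[\widehat{\mathcal E}_\lambda(f_{\lambda,\gamma})\big]+2\,\mathbb E\big[\widehat{\mathcal E}_\lambda(f_{\lambda,\gamma})\big]. \]
   Context: Let $\mathcal X$ be a set and $k_\gamma$ a positive definite kernel on $\mathcal X$ with RKHS $\mathcal H$. Fixed points $x_1,\dots,x_n\in\mathcal X$, $f^*:\mathcal X\to\mathbb R$, labels $y_i=f^*(x_i)+\epsilon_i$ with $\epsilon_i$ i.i.d. real, $\mathbb E[\epsilon_i]=0$, $\mathbb E[\epsilon_i^2]=\sigma^2$; $Y=(y_i)_i$, $f(X)=(f(x_i))_i$. Fixed inducing points $z_1,\dots,z_m$. $K_{ij}=k_\gamma(x_i,x_j)$, $(K_{nm})_{ij}=k_\gamma(x_i,z_j)$, $(K_{mm})_{ij}=k_\gamma(z_i,z_j)$, $\widetilde K=K_{nm}K_{mm}^\dagger K_{nm}^\top$ ($\dagger$ = Moore–Penrose pseudo-inverse). $\widehat{\mathcal E}_\lambda(f)=\frac1n\|f(X)-Y\|^2+\lambda\|f\|_{\mathcal H}^2$. $\mathcal H_m=\operatorname{span}\{k_\gamma(z_j,\cdot)\}_{j=1}^m$. The noise-less KRR estimator is $f_{\lambda,\gamma}=\arg\min_{f\in\mathcal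 H}\frac1n\|f(X)-f^*(X)\|^2+\lambda\|f\|_{\mathcal H}^2$ (deterministic). Expectation is over the noise. *)

(* Defs.v *)
From HB Require Import structures.
From mathcomp Require Import all_boot all_order all_algebra.
From mathcomp Require Import all_classical all_reals all_analysis.
Set Implicit Arguments. Unset Strict Implicit. Unset Printing Implicit Defensive.
Import Order.TTheory GRing.Theory Num.Theory.
Local Open Scope classical_set_scope.
Local Open Scope ring_scope.

Definition is_inner_product (R : realType) (V : lmodType R) (ip : V -> V -> R) :=
  [/\ (forall a u v w, ip (a *: u + v) w = a * ip u w + ip v w),
      (forall u v, ip u v = ip v u),
      (forall v, 0 <= ip v v) &
      (forall v, ip v v = 0 -> v = 0)].

Definition hnorm2 (R : realType) (V : lmodType R) (ip : V -> V -> R) (f : V) : R :=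
  ip f f.

(* A reproducing-kernel structure for the kernel k on X: V is a space of
   functions on X (f is identified with x |-> ip f (kx x), and this
   identification is injective) whose reproducing kernel is k, i.e.
   kx x = k(x, .) and k x y = <k(x,.), k(y,.)>. *)
Definition is_rkhs (X : Type) (R : realType) (V : lmodType R) (ip : V -> V -> R)
  (k : X -> X -> R) (kx : X -> V) :=
  [/\ is_inner_product ip,
      (forall x y, ip (kx x) (kx y) = k x y) &
      (forall f, (forall x, ip f (kx x) = 0) -> f = 0)].

Definition feval (X : Type) (R : realType) (V : lmodType R) (ip : V -> V -> R)
  (kx : X -> V) (f : V) (x : X) : R := ip f (kx x).

Definition Hm (X : Type) (R : realType) (V : lmodType R) (kx : X -> V) (m : nat)
  (z : 'I_m -> X) : set V :=
  [set v | exists c : 'I_m -> R, v = \sum_(j < m) c j *: kx (z j)].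

Definition is_orth_proj (R : realType) (V : lmodType R) (ip : V -> V -> R)
  (S : set V) (Pr : V -> V) :=
  forall f, S (Pr f) /\ (forall g, S g -> ip (f - Pr f) g = 0).

Definition gram (X : Type) (R : realType) (p q : nat) (k : X -> X -> R)
  (a : 'I_p -> X) (b : 'I_q -> X) : 'M[R]_(p, q) :=
  \matrix_(i < p, j < q) k (a i) (b j).

(* B is the Moore--Penrose pseudo-inverse of A (Penrose conditions; over the
   reals conjugate transpose is transpose). *)
Definition is_MP_pinv (R : realType) (p q : nat) (A : 'M[R]_(p, q))
  (B : 'M[R]_(q, p)) :=
  [/\ A *m B *m A = A, B *m A *m B = B,
      (A *m B)^T = A *m B & (B *m A)^T = B *m A].

Definition mutually_independent d (T : measurableType d) (R : realType)
  (P : probability T R) (n : nat) (eps : 'I_n -> {RV P >-> R}) :=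
  forall B : 'I_n -> set R, (forall i, measurable (B i)) ->
    P (\bigcap_i (eps i @^-1` B i)) = (\prod_(i < n) P (eps i @^-1` B i))%E.

Definition identically_distributed d (T : measurableType d) (R : realType)
  (P : probability T R) (n : nat) (eps : 'I_n -> {RV P >-> R}) :=
  forall i j (B : set R), measurable B -> P (eps i @^-1` B) = P (eps j @^-1` B).

Definition emp_risk (X : Type) (R : realType) (V : lmodType R) (ip : V -> V -> R)
  (kx : X -> V) (n : nat) (x : 'I_n -> X) (Y : 'I_n -> R) (lam : R) (f : V) : R :=
  n%:R^-1 * (\sum_(i < n) (feval ip kx f (x i) - Y i) ^+ 2) + lam * hnorm2 ip f.

Definition is_noiseless_krr (X : Type) (R : realType) (V : lmodType R)
  (ip : V -> V -> R) (kx : X -> V) (n : nat) (x : 'I_n -> X) (fstar : X -> R)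
  (lam : R) (f : V) :=
  forall g, emp_risk ip kx x (fun i => fstar (x i)) lam f
            <= emp_risk ip kx x (fun i => fstar (x i)) lam g.

(* Main.v *)
Require Import Defs.
From HB Require Import structures.
From mathcomp Require Import all_boot all_order all_algebra.
From mathcomp Require Import all_classical all_reals all_analysis.
From mathcomp Require Import ring lra.
Import Order.TTheory GRing.Theory Num.Theory.
Local Open Scope classical_set_scope.
Local Open Scope ring_scope.
Set Implicit Arguments. Unset Strict Implicit.

Section IP.
Variables (R : realType) (V : lmodType R) (ip : V -> V -> R).
Hypothesis hip : is_inner_product ip.

Lemma ipC u v : ip u v = ip v u.
Proof. by case: hip. Qed.

Lemma ipZDl a u v w : ip (a *: u + v) w = a * ip u w + ip v w.
Proof. by case: hip. Qed.

Lemma ip0l w : ip 0 w = 0.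
Proof.
have := ipZDl 1 0 0 w; rewrite scaler0 addr0 mul1r => h; lra.
Qed.

Lemma ipDl u v w : ip (u + v) w = ip u w + ip v w.
Proof. by rewrite -[u]scale1r ipZDl mul1r scale1r. Qed.

Lemma ipZl a u w : ip (a *: u) w = a * ip u w.
Proof. by rewrite -[a *: u]addr0 ipZDl ip0l addr0. Qed.

Lemma ipNl u w : ip (- u) w = - ip u w.
Proof. by rewrite -scaleN1r ipZl mulN1r. Qed.

Lemma ipBl u v w : ip (u - v) w = ip u w - ip v w.
Proof. by rewrite ipDl ipNl. Qed.

Lemma ipBr u v w : ip w (u - v) = ip w u - ip w v.
Proof. by rewrite ipC ipBl ipC [ip v w]ipC. Qed.

Lemma ipZr a u w : ip w (a *: u) = a * ip w u.
Proof. by rewrite ipC ipZl ipC. Qed.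

Lemma ip0r w : ip w 0 = 0.
Proof. by rewrite ipC ip0l. Qed.

Lemma ip_suml m (F : 'I_m -> V) w :
  ip (\sum_(j < m) F j) w = \sum_(j < m) ip (F j) w.
Proof.
elim/big_rec2: _ => [|j y1 y2 _ <-]; first by rewrite ip0l.
by rewrite ipDl.
Qed.

Lemma ip_ge0 v : 0 <= ip v v.
Proof. by case: hip. Qed.

Lemma ip_CS u v : ip u v ^+ 2 <= ip u u * ip v v.
Proof.
have [v0|vn0] := eqVneq (ip v v) 0.
  case: hip => _ _ _ /(_ v v0) ->; rewrite ip0r ip0r; lra.
have vp : 0 < ip v v by rewrite lt_def vn0 ip_ge0.
pose t := ip u v / ip v v.
have := ip_ge0 (u - t *: v).
rewrite ipBl !ipBr !ipZl !ipZr [ip v u]ipC.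
have -> : t * ip u v - t * (t * ip v v) = 0.
  by rewrite /t; field.
rewrite subr0 subr_ge0 /t => h.
rewrite -(ler_pM2r vp) in h; rewrite mulrAC divfK // in h.
Qed.

End IP.
Section RK.
Variables (R : realType) (X : Type) (k : X -> X -> R)
  (V : lmodType R) (ip : V -> V -> R) (kx : X -> V).
Hypothesis hH : is_rkhs ip k kx.
Variables (m : nat) (z : 'I_m -> X) (Pr : V -> V).
Hypothesis hPr : is_orth_proj ip (Hm kx z) Pr.

Let hip : is_inner_product ip. Proof. by case: hH. Qed.
Let hk a b : ip (kx a) (kx b) = k a b. Proof. by case: hH. Qed.

Lemma ipDr u v w : ip w (u + v) = ip w u + ip w v.
Proof. by rewrite (ipC hip) (ipDl hip) (ipC hip u) (ipC hip v). Qed.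

Lemma ksym a b : k a b = k b a.
Proof. by rewrite -!hk ipC. Qed.

Lemma kz_Hm l : Hm kx z (kx (z l)).
Proof.
exists (fun j => if j == l then 1 else 0).
rewrite (bigD1 l) //= eqxx scale1r big1 ?addr0 // => j /negbTE ->.
by rewrite scale0r.
Qed.

Lemma pyth f : ip f f = ip (Pr f) (Pr f) + ip (f - Pr f) (f - Pr f).
Proof.
have [hS ho] := hPr f.
have o1 : ip (f - Pr f) (Pr f) = 0 by apply: ho.
have -> : ip f f = ip ((f - Pr f) + Pr f) ((f - Pr f) + Pr f) by rewrite subrK.
rewrite (ipDl hip) !(ipDr (f - Pr f) (Pr f)) o1 (ipC hip (Pr f)) o1.
by rewrite addr0 add0r addrC.
Qed.

Lemma eval_bound f y :
  (feval ip kx (Pr f) y - feval ip kx f y) ^+ 2 <=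
  ip f f * ip (kx y - Pr (kx y)) (kx y - Pr (kx y)).
Proof.
set g := f - Pr f; set h := kx y - Pr (kx y).
have e1 : feval ip kx (Pr f) y - feval ip kx f y = - ip g h.
  have o : ip f (Pr (kx y)) - ip (Pr f) (Pr (kx y)) = 0.
    by rewrite -ipBl //; apply: (hPr f).2; exact: (hPr _).1.
  rewrite /feval /g /h ipBl // ipBr // ipBr //.
  move: o; lra.
rewrite e1 sqrrN.
apply: le_trans (ip_CS hip g h) _.
apply: ler_wpM2r; first exact: ip_ge0.
rewrite (pyth f) -/g lerDr; exact: ip_ge0.
Qed.

Lemma Pr_le f : ip (Pr f) (Pr f) <= ip f f.
Proof. by rewrite (pyth f) lerDl; exact: ip_ge0. Qed.

Lemma diag_eq (D : 'M[R]_m) (hD : is_MP_pinv (gram k z z) D) y :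
  let b := \row_l k y (z l) in
  k y y - (b *m D *m b^T) 0 0 = ip (kx y - Pr (kx y)) (kx y - Pr (kx y)).
Proof.
move=> b.
have [[c hc] ho] := hPr (kx y).
pose cv : 'rV[R]_m := \row_j c j.
have hb : b = cv *m gram k z z.
  apply/matrixP => i l; rewrite !mxE.
  transitivity (ip (Pr (kx y)) (kx (z l))).
    have := ho _ (kz_Hm l); rewrite ipBl // hk => /eqP; rewrite subr_eq0 => /eqP.
    by [].
  rewrite hc ip_suml //; apply: eq_bigr => j _.
  by rewrite ipZl // hk !mxE.
have sym : (gram k z z)^T = gram k z z.
  by apply/matrixP => i j; rewrite !mxE ksym.
have e1 : (b *m D *m b^T) 0 0 = \sum_l k y (z l) * c l.
  rewrite {2}hb trmx_mul sym !mulmxA.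
  case: hD => h1 _ _ _.
  rewrite {1}hb -(mulmxA cv (gram k z z) D) -(mulmxA cv _ (gram k z z)) h1.
  rewrite -hb !mxE; apply: eq_bigr => l _; by rewrite !mxE.
rewrite e1.
set h := kx y - Pr (kx y).
have ohP : ip h (Pr (kx y)) = 0 by apply: ho; exists c.
rewrite {2}/h ipBr // ohP subr0 /h ipBl // hk hc ip_suml //.
congr (_ - _); apply: eq_bigr => l _.
by rewrite ipZl // hk ksym mulrC.
Qed.

End RK.
Lemma emp_risk_ge0 (R : realType) (X : Type) (V : lmodType R) (ip : V -> V -> R)
  (hip : is_inner_product ip) (kx : X -> V) n (x : 'I_n -> X) Yv lam f :
  0 <= lam -> 0 <= emp_risk ip kx x Yv lam f.
Proof.
move=> l0; rewrite /emp_risk; apply: addr_ge0.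
  apply: mulr_ge0; first by rewrite invr_ge0.
  by apply: sumr_ge0 => i _; exact: sqr_ge0.
by apply: mulr_ge0 => //; exact: ip_ge0.
Qed.

Lemma pointwise (R : realType) (X : Type) (k : X -> X -> R)
  (V : lmodType R) (ip : V -> V -> R) (kx : X -> V)
  (hH : is_rkhs ip k kx) (m : nat) (z : 'I_m -> X) (Pr : V -> V)
  (hPr : is_orth_proj ip (Hm kx z) Pr)
  n (hn : (0 < n)%N) (x : 'I_n -> X) Yv lam (hlam : 0 < lam) f :
  forall S, S = \sum_(i < n) ip (kx (x i) - Pr (kx (x i))) (kx (x i) - Pr (kx (x i))) ->
  emp_risk ip kx x Yv lam (Pr f) <=
  (2 / (n%:R * lam) * S) * emp_risk ip kx x Yv lam f + 2 * emp_risk ip kx x Yv lam f.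
Proof.
move=> S hS.
have hip : is_inner_product ip by case: hH.
have S0 : 0 <= S by rewrite hS; apply: sumr_ge0 => i _; exact: ip_ge0.
have F0 : 0 <= ip f f by exact: ip_ge0.
have PF := Pr_le hH hPr f.
set B2 := \sum_(i < n) (feval ip kx f (x i) - Yv i) ^+ 2.
set A2 := \sum_(i < n) (feval ip kx (Pr f) (x i) - Yv i) ^+ 2.
have B0 : 0 <= B2 by apply: sumr_ge0 => i _; exact: sqr_ge0.
have hA : A2 <= 2 * (ip f f * S) + 2 * B2.
  rewrite /A2 /B2 hS mulr_sumr !mulr_sumr -big_split /=.
  apply: ler_sum => i _.
  have := eval_bound hH hPr f (x i).
  set a := feval ip kx (Pr f) (x i) - feval ip kx f (x i).
  have -> : feval ip kx (Pr f) (x i) - Yv i = a + (feval ip kx f (x i) - Yv i).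
    by rewrite /a; ring.
  set b := feval ip kx f (x i) - Yv i.
  move=> hab.
  have : 0 <= (a - b) ^+ 2 by exact: sqr_ge0.
  rewrite !expr2 in hab * => h2; nra.
have npos : 0 < n%:R :> R by rewrite ltr0n.
set ni := n%:R^-1 : R.
have ni0 : 0 < ni by rewrite invr_gt0.
rewrite /emp_risk /hnorm2 -/B2 -/A2 -/ni.
have e : 2 / (n%:R * lam) = 2 * ni / lam.
  by rewrite /ni invfM mulrA.
rewrite e.
have t1 : 0 <= 2 * ni / lam * S * (ni * B2).
  apply: mulr_ge0; last by apply: mulr_ge0 => //; exact: ltW.
  apply: mulr_ge0 => //; apply: mulr_ge0; last by rewrite invr_ge0 ltW.
  by apply: mulr_ge0 => //; exact: ltW.
have t2 : 2 * ni / lam * S * (lam * ip f f) = 2 * ni * S * ip f f.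
  by field; rewrite gt_eqF.
have t3 : ni * A2 <= ni * (2 * (ip f f * S) + 2 * B2).
  by rewrite ler_pM2l.
rewrite mulrDr t2.
have t4 : lam * ip (Pr f) (Pr f) <= lam * ip f f by rewrite ler_pM2l.
nra.
Qed.
Lemma tr_eq (R : realType) (X : Type) (k : X -> X -> R)
  (V : lmodType R) (ip : V -> V -> R) (kx : X -> V)
  (hH : is_rkhs ip k kx) (m : nat) (z : 'I_m -> X) (Pr : V -> V)
  (hPr : is_orth_proj ip (Hm kx z) Pr) (D : 'M[R]_m)
  (hD : is_MP_pinv (gram k z z) D) n (x : 'I_n -> X) :
  \tr (gram k x x - gram k x z *m D *m (gram k x z)^T) =
  \sum_(i < n) ip (kx (x i) - Pr (kx (x i))) (kx (x i) - Pr (kx (x i))).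
Proof.
rewrite /mxtrace; apply: eq_bigr => i _.
rewrite -(diag_eq hH hPr hD (x i)).
rewrite !mxE; congr (_ - _).
apply: eq_bigr => l _; rewrite !mxE; congr (_ * _).
apply: eq_bigr => j _; by rewrite !mxE.
Qed.

Lemma meas_risk (R : realType) (X : Type) (V : lmodType R) (ip : V -> V -> R)
  (kx : X -> V) n (x : 'I_n -> X) (fstar : X -> R)
  (d : measure_display) (T : measurableType d) (P : probability T R)
  (eps : 'I_n -> {RV P >-> R}) lam g :
  measurable_fun setT
    (fun w => emp_risk ip kx x (fun i => fstar (x i) + eps i w) lam g).
Proof.
rewrite /emp_risk.
apply: measurable_realfun.measurable_funD; last exact: measurable_cst.
apply: measurable_realfun.measurable_funM; first exact: measurable_cst.
apply: measurable_sum => i.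
apply: measurable_realfun.measurable_funX.
apply: measurable_realfun.measurable_funB; first exact: measurable_cst.
apply: measurable_realfun.measurable_funD; first exact: measurable_cst.
exact: measurable_funP.
Qed.

Theorem mainTheorem3
  (R : realType) (X : Type) (k : X -> X -> R)
  (V : lmodType R) (ip : V -> V -> R) (kx : X -> V)
  (hH : is_rkhs ip k kx)
  (n m : nat) (hn : (0 < n)%N) (x : 'I_n -> X) (z : 'I_m -> X)
  (fstar : X -> R)
  (d : measure_display) (T : measurableType d) (P : probability T R)
  (eps : 'I_n -> {RV P >-> R}) (sigma2 : R)
  (hind : mutually_independent eps) (hid : identically_distributed eps)
  (hmean : forall i, ('E_P[eps i] = 0)%E)
  (hvar : forall i, ('E_P[(fun w => (eps i w ^+ 2)%R)] = sigma2%:E)%E)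
  (Kmm_dag : 'M[R]_m) (hdag : is_MP_pinv (gram k z z) Kmm_dag)
  (Pr : V -> V) (hPr : is_orth_proj ip (Hm kx z) Pr)
  (lam : R) (hlam : 0 < lam)
  (flam : V) (hflam : is_noiseless_krr ip kx x fstar lam flam) :
  let K := gram k x x in
  let Knm := gram k x z in
  let Ktilde := Knm *m Kmm_dag *m Knm^T in
  let Y := fun w i => fstar (x i) + eps i w in
  ('E_P[(fun w => (emp_risk ip kx x (Y w) lam (Pr flam))%R)]
   <= (2 / (n%:R * lam) * \tr (K - Ktilde))%:E
        * 'E_P[(fun w => (emp_risk ip kx x (Y w) lam flam)%R)]
      + 2%:E * 'E_P[(fun w => (emp_risk ip kx x (Y w) lam flam)%R)])%E.
Proof.
cbv zeta.
have hip : is_inner_product ip by case: hH.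
have htr := tr_eq hH hPr hdag x.
set S := \tr (_ - _).
set C := 2 / (n%:R * lam) * S.
have S0 : 0 <= S.
  rewrite /S htr; apply: sumr_ge0 => i _; exact: ip_ge0.
have C0 : 0 <= C.
  apply: mulr_ge0 => //; apply: divr_ge0 => //.
  by apply: mulr_ge0; [exact: ler0n | exact: ltW].
set A := fun w => emp_risk ip kx x (fun i => fstar (x i) + eps i w) lam (Pr flam).
set B := fun w => emp_risk ip kx x (fun i => fstar (x i) + eps i w) lam flam.
have A0 w : 0 <= A w by apply: emp_risk_ge0 => //; exact: ltW.
have B0 w : 0 <= B w by apply: emp_risk_ge0 => //; exact: ltW.
have mA : measurable_fun setT A by exact: meas_risk.
have mB : measurable_fun setT B by exact: meas_risk.
have pw w : A w <= (C + 2) * B w.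
  rewrite mulrDl; apply: (pointwise hH hPr hn _ hlam).
  by rewrite /C /S htr.
have mCB : measurable_fun setT (fun w => (C + 2) * B w).
  by apply: measurable_realfun.measurable_funM => //; exact: measurable_cst.
have CB0 w : 0 <= (C + 2) * B w by apply: mulr_ge0 => //; apply: addr_ge0.
apply: (@le_trans _ _ ('E_P[(fun w => (C + 2) * B w)%R])%E).
  exact: expectation_le mA mCB A0 CB0 (aeW _ pw).
have eZ : ('E_P[(fun w => (C + 2) * B w)%R] = (C + 2)%:E * 'E_P[B])%E.
  rewrite unlock.
  under eq_integral do rewrite EFinM.
  apply: ge0_integralZl_EFin => //.
  - by move=> w _; rewrite lee_fin.
  - exact/measurable_realfun.measurable_EFinP.
  - by apply: addr_ge0.
rewrite eZ EFinD ge0_muleDl // lee_fin.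
Qed.
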